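(* Let $X=\{x_1,\dots,x_n\}$ be a finite biquandle and let $K_1,K_2$ be virtual knotoid diagrams. Then \[\mathcal{M}_X(K_1K_2)=\mathcal{M}_X(K_1)\,\mathcal{M}_X(K_2)\] (matrix product), where $\mathcal{M}_X(K)$ is the $n\times n$ matrix whose $(i,j)$-entry is the number of $X_{ij}$-colorings of $K$.
   Context: A virtual knotoid diagram is an immersed oriented open curve in $S^2$ (oriented from the tail endpoint to the head endpoint) with finitely many transversal double points, each a classical crossing (with over/under information) or a virtual crossing. Product: for virtual knotoid diagrams $K_1,K_2$ in $S^2$ with tails $t_1,t_2$ and heads $h_1,h_2$, let $U$ be a disk neighborhood of $h_1$ meeting $K_1$ in a radius and $V$ a disk neighborhood of $t_2$ meeting $K_2$ in a radius. $K_1K_2$ is obtained by gluing $S^2\setminus\mathrm{Int}(U)$ and $S^2\setminus\mathrm{Int}(V)$ along a homeomorphism $\partial U\to\partial V$ sending $K_1\cap\partial U$ to $K_2\cap\partial V$; it has tail $t_1$ and head $h_2$. A biquandle is a set $X$ with binary operations $\underline{\triangleright},\overline{\triangleright}$ such that for all $x,y,z$: $x\underline{\triangleright}x=x\overline{\triangleright}x$; the maps $x\mapsto x\overline{\triangleright}y$, $x\mapsto x\underline{\triangleright}y$ and $(x,y)\mapsto(y\overline{\triangleright}x,\,x\underline{\triangleright}y)$ are invertible; and $(x\underline{\triangleright}y)\underline{\triangleright}(z\underline{\triangleright}y)=(x\underline{\triangleright}z)\underline{\triangleright}(y\overline{\triangleright}z)$, $(x\underline{\triangleright}y)\overline{\triangleright}(z\underline{\triangleright}y)=(x\overline{\triangleright}z)\underline{\triangleright}(y\overline{\triangleright}z)$,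 $(x\overline{\triangleright}y)\overline{\triangleright}(z\overline{\triangleright}y)=(x\overline{\triangleright}z)\overline{\triangleright}(y\underline{\triangleright}z)$. Semi-arcs are the pieces into which crossings cut the curve; the tail (head) semi-arc contains the tail (head). An $X$-coloring assigns an element of $X$ to each semi-arc such that at each classical crossing, drawn with both strands oriented upward, incoming lower-left and lower-right colors $x,y$ give outgoing upper-left and upper-right colors $y\overline{\triangleright}x$ and $x\underline{\triangleright}y$, and at virtual crossings colors pass through unchanged. An $X_{ij}$-coloring is an $X$-coloring with tail semi-arc colored $x_i$ and head semi-arc colored $x_j$. *)

(* Defs.v *)
From mathcomp Require Import all_boot all_order all_algebra.
Set Implicit Arguments. Unset Strict Implicit. Unset Printing Implicit Defensive.
Import GRing.Theory.

(* [und x y] is x \underline{\triangleright} y, [ovr x y] is x \overline{\triangleright} y. *)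
Definition is_biquandle (X : Type) (und ovr : X -> X -> X) : Prop :=
  [/\ (forall x, und x x = ovr x x),
      (forall y, bijective (fun x => ovr x y)),
      (forall y, bijective (fun x => und x y)),
      bijective (fun p : X * X => (ovr p.2 p.1, und p.1 p.2)) &
      (forall x y z,
         [/\ und (und x y) (und z y) = und (und x z) (ovr y z),
             ovr (und x y) (und z y) = und (ovr x z) (ovr y z) &
             ovr (ovr x y) (ovr z y) = ovr (ovr x z) (und y z)])].

(* Virtual crossings carry no information for colorings (colors pass
   through unchanged), so a virtual knotoid diagram is encoded by the
   sequence of classical crossing passages met when travelling from the
   tail to the head.  A passage is (label, left, over):
   - label : the classical crossing being passed;
   - left  : true iff, when the crossing is drawn with both strands
             oriented upward, this strand goes from lower-left to
             upper-right (false: from lower-right to upper-left);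
   - over  : true iff this passage is the over-strand. *)
Definition visit := (nat * bool * bool)%type.
Definition vlabel (v : visit) : nat := v.1.1.
Definition vleft (v : visit) : bool := v.1.2.
Definition vover (v : visit) : bool := v.2.

Definition v0 : visit := (0, false, false).

Definition gauss_wf (w : seq visit) : Prop :=
  (forall v, v \in w -> count (fun u => vlabel u == vlabel v) w = 2) /\
  (forall p q, p < size w -> q < size w -> p != q ->
     vlabel (nth v0 w p) = vlabel (nth v0 w q) ->
     vleft (nth v0 w p) != vleft (nth v0 w q) /\
     vover (nth v0 w p) != vover (nth v0 w q)).

(* Product K1 K2: glue the head of K1 to the tail of K2; the crossings of
   K2 are relabelled to be disjoint from those of K1. *)
Definition gshift (n : nat) (v : visit) : visit := (n + vlabel v, vleft v, vover v).
Definition gprod (w1 w2 : seq visit) : seq visit :=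
  w1 ++ map (gshift (\max_(v <- w1) vlabel v).+1) w2.

(* Semi-arcs of a code w are indexed by 0 .. size w: semi-arc k lies between
   passage k-1 and passage k; semi-arc 0 is the tail semi-arc and semi-arc
   (size w) the head semi-arc.  At a crossing with left passage p and right
   passage q, the incoming colors are x = col p (lower-left), y = col q
   (lower-right); the outgoing colors are col (q+1) = y ovr x (upper-left)
   and col (p+1) = x und y (upper-right). *)
Definition is_coloring (X : finType) (und ovr : X -> X -> X) (w : seq visit)
    (col : {ffun 'I_(size w).+1 -> X}) : bool :=
  [forall p : 'I_(size w), forall q : 'I_(size w),
     ((p != q) && (vlabel (nth v0 w p) == vlabel (nth v0 w q))
        && vleft (nth v0 w p)) ==>
     ((col (inord p.+1) == und (col (inord p)) (col (inord q))) &&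
      (col (inord q.+1) == ovr (col (inord q)) (col (inord p))))].

Definition ncol (X : finType) (und ovr : X -> X -> X) (w : seq visit)
    (i j : 'I_#|X|) : nat :=
  #|[set col : {ffun 'I_(size w).+1 -> X} |
      [&& is_coloring und ovr col, col ord0 == enum_val i
        & col ord_max == enum_val j]]|.

Definition colmx (X : finType) (und ovr : X -> X -> X) (w : seq visit)
  : 'M[nat]_#|X| := \matrix_(i, j) ncol und ovr w i j.

(* Main.v *)
Require Import Defs.
From mathcomp Require Import all_boot all_order all_algebra.
Set Implicit Arguments. Unset Strict Implicit. Unset Printing Implicit Defensive.

Section Aux.
Variables (X : finType) (und ovr : X -> X -> X).

Definition colP (w : seq visit) (f : nat -> X) := forall p q,
  p < size w -> q < size w -> p != q ->
  vlabel (nth v0 w p) = vlabel (nth v0 w q) -> vleft (nth v0 w p) ->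
  f p.+1 = und (f p) (f q) /\ f q.+1 = ovr (f q) (f p).

Definition cf N (c : {ffun 'I_N.+1 -> X}) (k : nat) := c (inord k).

Lemma cfv N (c : {ffun 'I_N.+1 -> X}) (k : 'I_N.+1) : c k = cf c k.
Proof. by rewrite /cf inord_val. Qed.

Lemma colE w (col : {ffun 'I_(size w).+1 -> X}) :
  is_coloring und ovr col <-> colP w (cf col).
Proof.
split.
- move/forallP=> H p q hp hq pq lab l.
  have := H (Ordinal hp); move/forallP/(_ (Ordinal hq))/implyP => /=.
  rewrite pq lab eqxx l => /(_ isT) /andP[/eqP E1 /eqP E2]; by rewrite /cf E1 E2.
- move=> H; apply/forallP => p; apply/forallP => q; apply/implyP.
  move=> /andP[/andP[pq /eqP lab] l].
  have [E1 E2] := H p q (ltn_ord p) (ltn_ord q) pq lab l.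
  by move: E1 E2; rewrite /cf => -> ->; rewrite !eqxx.
Qed.

Lemma colP_ext w f g : (forall k, k <= size w -> f k = g k) -> colP w f -> colP w g.
Proof.
move=> E H p q hp hq pq lab l.
rewrite -(E p.+1 hp) -(E q.+1 hq) -(E p (ltnW hp)) -(E q (ltnW hq)).
exact: H.
Qed.

Definition mlab (w1 : seq visit) := (\max_(v <- w1) vlabel v).+1.

Lemma size_gprod w1 w2 : size (gprod w1 w2) = size w1 + size w2.
Proof. by rewrite size_cat size_map. Qed.

Lemma nth_gprod1 w1 w2 p : p < size w1 -> nth v0 (gprod w1 w2) p = nth v0 w1 p.
Proof. by move=> h; rewrite nth_cat h. Qed.

Lemma nth_gprod2 w1 w2 p : p < size w2 ->
  nth v0 (gprod w1 w2) (size w1 + p) = gshift (mlab w1) (nth v0 w2 p).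
Proof.
by move=> h; rewrite nth_cat ltnNge leq_addr /= addKn (nth_map v0).
Qed.

Lemma lab_lt w1 v : v \in w1 -> vlabel v < mlab w1.
Proof. by move=> h; rewrite ltnS; apply: (leq_bigmax_seq (P := predT)). Qed.

Lemma colP_gprod w1 w2 f :
  colP (gprod w1 w2) f <-> colP w1 f /\ colP w2 (fun k => f (size w1 + k)).
Proof.
split.
- move=> H; split.
  + move=> p q hp hq pq lab l.
    have hp' : p < size (gprod w1 w2) by rewrite size_gprod ltn_addr.
    have hq' : q < size (gprod w1 w2) by rewrite size_gprod ltn_addr.
    by apply: H => //; rewrite ?nth_gprod1.
  + move=> p q hp hq pq lab l.
    have := H (size w1 + p) (size w1 + q).
    rewrite !nth_gprod2 // size_gprod !ltn_add2l -!addnS eqn_add2l.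
    apply => //; by rewrite /vlabel /= -/(vlabel _) lab.
- case=> H1 H2 p q; rewrite size_gprod => hp hq pq lab l.
  case: (ltnP p (size w1)) => hp1; case: (ltnP q (size w1)) => hq1.
  + by rewrite !nth_gprod1 // in lab l; exact: H1.
  + exfalso.
    have [q' Eq] : exists q', q = size w1 + q' by exists (q - size w1); rewrite subnKC.
    rewrite Eq ltn_add2l in hq; rewrite Eq nth_gprod2 // nth_gprod1 // in lab.
    have := lab_lt (mem_nth v0 hp1); rewrite lab /vlabel /= -/(vlabel _).
    by rewrite ltnNge leq_addr.
  + exfalso.
    have [p' Ep] : exists p', p = size w1 + p' by exists (p - size w1); rewrite subnKC.
    rewrite Ep ltn_add2l in hp; rewrite Ep nth_gprod2 // nth_gprod1 // in lab.
    have := lab_lt (mem_nth v0 hq1); rewrite -lab /vlabel /= -/(vlabel _).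
    by rewrite ltnNge leq_addr.
  + have [q' Eq] : exists q', q = size w1 + q' by exists (q - size w1); rewrite subnKC.
    have [p' Ep] : exists p', p = size w1 + p' by exists (p - size w1); rewrite subnKC.
    subst p q; rewrite ltn_add2l in hp; rewrite ltn_add2l in hq.
    rewrite !nth_gprod2 // in lab l; rewrite eqn_add2l in pq.
    rewrite -!addnS; apply: H2 => //.
    by move: lab; rewrite /vlabel /= => /addnI.
Qed.

Definition S w (a b : X) := [set col : {ffun 'I_(size w).+1 -> X} |
  [&& is_coloring und ovr col, col ord0 == a & col ord_max == b]].

Lemma inS w a b col : (col \in S w a b) <->
  [/\ colP w (cf col), cf col 0 = a & cf col (size w) = b].
Proof.
rewrite inE (cfv col ord0) (cfv col ord_max) /=.
split.
- by case/and3P => /colE ? /eqP ? /eqP ?.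
- by case=> /colE -> -> ->; rewrite !eqxx.
Qed.

Definition split1 n1 N (c : {ffun 'I_N.+1 -> X}) : {ffun 'I_n1.+1 -> X} :=
  [ffun k : 'I_n1.+1 => c (inord k)].
Definition split2 n1 n2 N (c : {ffun 'I_N.+1 -> X}) : {ffun 'I_n2.+1 -> X} :=
  [ffun k : 'I_n2.+1 => c (inord (n1 + k))].
Definition glue n1 n2 N (c1 : {ffun 'I_n1.+1 -> X}) (c2 : {ffun 'I_n2.+1 -> X})
  : {ffun 'I_N.+1 -> X} :=
  [ffun k : 'I_N.+1 => if k <= n1 then c1 (inord k) else c2 (inord (k - n1))].

Arguments split1 n1 {N} c.
Arguments split2 n1 n2 {N} c.
Arguments glue n1 n2 N c1 c2 : clear implicits.

Lemma cf_split1 n1 N (c : {ffun 'I_N.+1 -> X}) k : k <= n1 ->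
  cf (split1 n1 c) k = cf c k.
Proof. by move=> h; rewrite /cf ffunE inordK. Qed.

Lemma cf_split2 n1 n2 N (c : {ffun 'I_N.+1 -> X}) k : k <= n2 ->
  cf (split2 n1 n2 c) k = cf c (n1 + k).
Proof. by move=> h; rewrite /cf ffunE inordK. Qed.

Lemma cf_glue n1 n2 N (c1 : {ffun 'I_n1.+1 -> X}) (c2 : {ffun 'I_n2.+1 -> X}) k :
  k <= N -> cf (glue n1 n2 N c1 c2) k = if k <= n1 then cf c1 k else cf c2 (k - n1).
Proof. by move=> h; rewrite /cf ffunE inordK. Qed.

Lemma count_prod w1 w2 a b :
  #|S (gprod w1 w2) a b| = \sum_(x : X) #|S w1 a x| * #|S w2 x b|.
Proof.
set g := gprod w1 w2; set n1 := size w1; set n2 := size w2.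
have hg : size g = n1 + n2 by rewrite size_gprod.
rewrite -sum1_card (partition_big (fun c : {ffun 'I_(size g).+1 -> X} => cf c n1) predT) //=.
apply: eq_bigr => x _.
rewrite sum1dep_card -(cardsX (S w1 a x) (S w2 x b)).
pose h (c : {ffun 'I_(size g).+1 -> X}) := (split1 n1 c, split2 n1 n2 c).
have hinj : injective h.
  move=> c c' [E1 E2]; apply/ffunP => k; rewrite (cfv c k) (cfv c' k).
  case: (leqP k n1) => hk.
    by rewrite -(@cf_split1 n1 _ c k hk) -(@cf_split1 n1 _ c' k hk) E1.
  have hk2 : k - n1 <= n2 by rewrite leq_subLR -hg -ltnS.
  have -> : (k : nat) = n1 + (k - n1) by rewrite subnKC // ltnW.
  by rewrite -(@cf_split2 n1 n2 _ c _ hk2) -(@cf_split2 n1 n2 _ c' _ hk2) E2.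
rewrite -(card_imset _ hinj); apply: eq_card => -[c1 c2].
rewrite in_setX; apply/imsetP/andP.
- case=> c; rewrite inE => /andP[/inS [cP c0 cN] /eqP cx] [-> ->].
  move/colP_gprod: cP => [P1 P2]; split; apply/inS; split.
  + by apply: colP_ext P1 => k hk; rewrite cf_split1.
  + by rewrite cf_split1.
  + by rewrite cf_split1.
  + by apply: colP_ext P2 => k hk; rewrite cf_split2.
  + by rewrite cf_split2 // addn0.
  + by rewrite cf_split2 // -hg.
- case=> /inS [P1 c10 c1x] /inS [P2 c20 c2b].
  rewrite -/n1 -/n2 in c1x c2b.
  exists (glue n1 n2 (size g) c1 c2).
    rewrite inE; apply/andP; split; last first.
      by rewrite cf_glue ?hg ?leq_addr // leqnn c1x.
    apply/inS; split.
    + apply/colP_gprod; split.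
        apply: colP_ext P1 => k hk; rewrite cf_glue ?hk //.
        by rewrite hg (leq_trans hk) ?leq_addr.
      apply: colP_ext P2 => k hk; rewrite cf_glue ?hg ?leq_add2l //.
      case: k hk => [|k] hk; first by rewrite addn0 leqnn c1x c20.
      rewrite addKn ifF //; apply/negbTE; rewrite -ltnNge.
      by rewrite -{1}(addn0 n1) ltn_add2l.
    + by rewrite cf_glue // leq0n.
    + rewrite cf_glue ?hg //; case: ifP => hle; last by rewrite addKn.
      have n20 : n2 = 0 by move: hle; rewrite -{2}(addn0 n1) leq_add2l leqn0 => /eqP.
      rewrite n20 addn0 c1x -c20 -c2b /cf; congr (c2 _); apply: val_inj.
      by rewrite /= !inordK.
  congr pair; apply/ffunP => k.
  + rewrite ffunE (cfv c1 k) /cf ffunE inordK; last first.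
      by rewrite ltnS hg (leq_trans (leq_ord k)) ?leq_addr.
    by rewrite -ltnS ltn_ord.
  + rewrite ffunE (cfv c2 k) /cf ffunE inordK; last first.
      by rewrite ltnS hg leq_add2l -ltnS ltn_ord.
    rewrite addKn.
    case: (leqP (n1 + k) n1) => hk //.
    have k0 : (k : nat) = 0 by move: hk; rewrite -{2}(addn0 n1) leq_add2l leqn0 => /eqP.
    by rewrite k0 addn0 -/(cf c1 n1) -/(cf c2 0) c1x c20.
Qed.

End Aux.

Theorem mainTheorem5 (X : finType) (und ovr : X -> X -> X) (w1 w2 : seq visit) :
  is_biquandle und ovr -> gauss_wf w1 -> gauss_wf w2 ->
  colmx und ovr (gprod w1 w2) = (colmx und ovr w1 *m colmx und ovr w2)%R.
Proof.
move=> _ _ _; apply/matrixP => i j; rewrite !mxE.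
rewrite [LHS](count_prod und ovr w1 w2).
rewrite (reindex (fun k : 'I_#|X| => enum_val k)) /=; last by apply: onW_bij; exact: enum_val_bij.
by apply: eq_bigr => k _; rewrite !mxE.
Qed.
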